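(* For every parameter budget $p\ge 0$, the set $A_p=\{A : A \text{ is a valid architecture and } \mathrm{numParams}(A)\le p\}$ is finite.
   Context: Fix an input $X\in\mathbb{R}^{H\times W\times C}$ with $H,W,C\in\mathbb{N}^+$ fixed. An architecture $A$ is a finite sequence of layers $l_1,\dots,l_N$ applied in order to the input. Each layer is of one of three kinds: (i) an activation function $\sigma$ drawn from a fixed finite set $\Sigma$ (e.g. sigmoid, ReLU, softmax), which has no parameters and does not change the spatial dimensions; (ii) a non-parametric pooling layer $q_s$ (e.g. max or average pooling) with stride $s$ and kernel size $k$, which has no parameters and, having no padding, reduces each spatial dimension of its input by at least one pixel; (iii) a parametric layer $f_\theta$ (convolution, batch normalization, fully connected), with parameter vector $\theta$ of size $|\theta|\in\mathbb{N}^+$, which does not increase spatial dimensions. For a given input shape there are only finitely many choices of pooling layer producing a valid (positive) output size, and for each $n$ only finitely many choices of parametric layer with $|\theta|\le n$. Standing assumption: if $l_i\in\Sigma$ then $l_{i+1}\notin\Sigma$ (no two consecutive activations). An architecture is valid if every intermediate spatial dimension is a positive integer. $\mathrm{numParams}(A)=\sum_i |\theta_i|$, summing over the parametric layers of $A$. *)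

(* Defs.v *)
From HB Require Import structures.
From mathcomp Require Import all_boot all_order all_algebra.
From mathcomp Require Import boolp classical_sets cardinality.
Set Implicit Arguments. Unset Strict Implicit. Unset Printing Implicit Defensive.
Import Order.TTheory GRing.Theory Num.Theory.

Local Open Scope ring_scope.

(* A tensor shape: (height, width, channels).  Spatial dimensions are integers
   so that non-positive (invalid) sizes can be represented. *)
Definition shape := (int * int * int)%type.
Definition sh_H (s : shape) : int := s.1.1.
Definition sh_W (s : shape) : int := s.1.2.

(* The layer vocabulary:
   - Act    : the fixed finite set Sigma of activation functions,
   - Pool   : the (descriptions of) non-parametric pooling layers
              (kind, stride s, kernel size k, ...), with output-shape map,
   - Par    : the (descriptions of) parametric layers, with output-shape map
              and parameter count |theta|. *)
Record NetSpec := {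
  Act : finType;
  Pool : Type;
  Par : Type;
  pool_out : Pool -> shape -> shape;
  par_out : Par -> shape -> shape;
  par_size : Par -> nat;
}.

Definition spec_ok (S : NetSpec) : Prop :=
  (* pooling (no padding) reduces each spatial dimension by at least one pixel *)
  (forall (q : Pool S) (s : shape),
      sh_H (pool_out q s) <= sh_H s - 1 /\ sh_W (pool_out q s) <= sh_W s - 1) /\
  (forall s : shape,
      finite_set [set q : Pool S | 0 < sh_H (pool_out q s) /\ 0 < sh_W (pool_out q s)]) /\
  (forall f : Par S, (0 < par_size f)%N) /\
  (forall (f : Par S) (s : shape),
      sh_H (par_out f s) <= sh_H s /\ sh_W (par_out f s) <= sh_W s) /\
  (forall n : nat, finite_set [set f : Par S | (par_size f <= n)%N]).

Inductive layer (S : NetSpec) : Type :=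
  | LAct of Act S
  | LPool of Pool S
  | LPar of Par S.

Definition arch (S : NetSpec) := seq (layer S).

Definition is_act (S : NetSpec) (l : layer S) : bool :=
  if l is LAct _ then true else false.

Fixpoint no_consec_act (S : NetSpec) (A : arch S) : bool :=
  match A with
  | l1 :: ((l2 :: _) as A') => ~~ (is_act l1 && is_act l2) && no_consec_act A'
  | _ => true
  end.

Definition layer_out (S : NetSpec) (l : layer S) (s : shape) : shape :=
  match l with
  | LAct _ => s
  | LPool q => pool_out q s
  | LPar f => par_out f s
  end.

Fixpoint valid_from (S : NetSpec) (s : shape) (A : arch S) : bool :=
  match A with
  | [::] => true
  | l :: A' =>
      let s' := layer_out l s in
      [&& 0 < sh_H s', 0 < sh_W s' & valid_from s' A']
  end.

Definition layer_params (S : NetSpec) (l : layer S) : nat :=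
  if l is LPar f then par_size f else 0%N.

Definition numParams (S : NetSpec) (A : arch S) : nat :=
  sumn (map (@layer_params S) A).

(* Main.v *)
Require Import Defs.
From HB Require Import structures.
From mathcomp Require Import all_boot all_order all_algebra.
From mathcomp Require Import boolp classical_sets cardinality.
From mathcomp Require Import zify.
Import Order.TTheory GRing.Theory Num.Theory.

Local Open Scope classical_set_scope.

Definition kna {S : NetSpec} (A : arch S) : nat := count (predC (@is_act S)) A.

Lemma size_kna (S : NetSpec) (A : arch S) :
  no_consec_act A -> (size A <= 2 * kna A + (if A is l :: _ then is_act l else false))%N.
Proof.
elim: A => [|l A IH] //=.
case: A IH => [|l2 A] IH /=.
  by case: l => //=.
move/andP=> [hn hA]; move: (IH hA); rewrite /kna /=.
case: l hn => [a|q|f] /=; case: l2 {IH hA} => [a2|q2|f2] /= //; lia.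
Qed.

Lemma kna_le (S : NetSpec) (hS : spec_ok S) (A : arch S) (s : Defs.shape) :
  (0 < sh_H s)%R -> valid_from s A ->
  ((kna A)%:Z <= (numParams A)%:Z + sh_H s - 1)%R.
Proof.
case: hS => [hpool [_ [hpos [hpar _]]]].
elim: A s => [|l A IH] s hs /=; first by lia.
move=> /and3P [h1 h2 hv].
have := IH _ h1 hv.
rewrite /kna /numParams /=.
case: l h1 h2 hv => [a|q|f] /= h1 h2 hv.
- rewrite /layer_params /=; lia.
- have [hq _] := hpool q s. rewrite /layer_params /=. lia.
- have [hq _] := hpar f s. have := hpos f. rewrite /layer_params /=. lia.
Qed.

Definition Fset (S : NetSpec) (n : nat) (s : Defs.shape) (b : nat) : set (arch S) :=
  [set A : arch S | valid_from s A /\ (numParams A <= b)%N /\ (size A <= n)%N].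

Lemma Fset_finite (S : NetSpec) (hS : spec_ok S) n :
  forall s b, finite_set (Fset S n s b).
Proof.
case: hS => [_ [hpoolf [_ [_ hparf]]]].
elim: n => [|n IH] s b.
  apply: (sub_finite_set (B := [set [::]])); last exact: finite_set1.
  by move=> [|l A]; rewrite /Fset /= => -[_ [_ h]].
pose U1 := \bigcup_(a in [set: Act S]) (cons (LAct a) @` Fset S n s b).
pose U2 := \bigcup_(q in [set q : Pool S | (0 < sh_H (pool_out q s))%R /\ (0 < sh_W (pool_out q s))%R])
             (cons (LPool q) @` Fset S n (pool_out q s) b).
pose U3 := \bigcup_(f in [set f : Par S | (par_size f <= b)%N])
             (cons (LPar f) @` Fset S n (par_out f s) (b - par_size f)).
apply: (sub_finite_set (B := [set [::]] `|` U1 `|` U2 `|` U3)).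
  move=> [|l A]; rewrite /Fset /= => -[hv [hb hn]]; first by left; left; left.
  move: hv hb hn => /= /and3P [h1 h2 hv]; rewrite /numParams /= => hb hn.
  case: l h1 h2 hv hb => [a|q|f] /= h1 h2 hv hb.
  - left; left; right; exists a => //; exists A; last by [].
    rewrite /Fset /=; split => //; split => //; rewrite /numParams; lia.
  - left; right; exists q => //; exists A; last by [].
    rewrite /Fset /=; split => //; split => //; rewrite /numParams; lia.
  - right; exists f => /=; first by lia.
    exists A; last by [].
    rewrite /Fset /=; split => //; split => //; rewrite /numParams; lia.
rewrite !finite_setU; split; [split; [split|]|].
- exact: finite_set1.
- apply: bigcup_finite => // a _; exact: finite_image.
- apply: bigcup_finite; first exact: hpoolf.
  move=> q _; exact: finite_image.
- apply: bigcup_finite; first exact: hparf.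
  move=> f _; exact: finite_image.
Qed.

Theorem theorem1 (S : NetSpec) (hS : spec_ok S) (H W C : nat)
    (hH : (0 < H)%N) (hW : (0 < W)%N) (hC : (0 < C)%N) (p : nat) :
  finite_set [set A : arch S |
                no_consec_act A
                /\ valid_from ((Posz H, Posz W), Posz C) A
                /\ (numParams A <= p)%N].
Proof.
apply: (sub_finite_set (B := Fset S (2 * (p + H) + 1) ((Posz H, Posz W), Posz C) p)).
  move=> A [hc [hv hp]]; split => //; split => //.
  have h1 := @size_kna S A hc.
  have h2 := @kna_le S hS A ( ((Posz H, Posz W), Posz C)) ltac:(rewrite /sh_H /=; lia) hv.
  rewrite /sh_H /= in h2.
  have h3 : (if A is l :: _ then is_act l else false) <= 1 by case: A {h1 h2 hc hv hp} => [|[]].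
  lia.
exact: Fset_finite.
Qed.
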